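(* Consider the network and loss $\mathcal{L}$ from the context with $|J|=1$. If $\overline{\mathbf{P}}$ is a stationary point of $\mathcal{L}$ that is not a local minimum, then there exist a unit vector $\boldsymbol{\ell}\in\mathbb{R}^D$ and a constant $C<0$ such that $\mathcal{L}(\overline{\mathbf{P}}+\delta\boldsymbol{\ell})-\mathcal{L}(\overline{\mathbf{P}})<0$ for all sufficiently small $\delta>0$ and $\mathcal{L}(\overline{\mathbf{P}}+\delta\boldsymbol{\ell})-\mathcal{L}(\overline{\mathbf{P}})\sim C\delta^2$ as $\delta\to0^+$.
   Context: Fix an integer $d>1$, finite index sets $I$ (hidden neurons), $J$ (output neurons), $K$ (samples), reals $\alpha^+\neq\alpha^-$, and $\rho(z)=\alpha^+z$ for $z\ge0$, $\rho(z)=\alpha^-z$ for $z<0$ (componentwise). Parameters $\mathbf{P}=(W,H)\in\mathbb{R}^D$, $D=|J||I|+|I|d$, $W\in\mathbb{R}^{|I|\times d}$ with rows $\mathbf{w}_i$, $H=(h_{ji})\in\mathbb{R}^{|J|\times|I|}$; output $\hat{\mathbf{y}}(\mathbf{P};\mathbf{x})=H\rho(W\mathbf{x})$; training data $\mathbf{x}_k\in\mathbb{R}^d$, $\mathbf{y}_k\in\mathbb{R}^{|J|}$, $k\in K$; loss $\mathcal{L}(\mathbf{P})=\frac12\sum_{k\in K}\|\hat{\mathbf{y}}(\mathbf{P};\mathbf{x}_k)-\mathbf{y}_k\|^2$. A point $\overline{\mathbf{P}}$ is a stationary point if $\lim_{\alpha\to0^+}\frac{\mathcal{L}(\overline{\mathbf{P}}+\alpha\mathbf{d})-\mathcal{L}(\overline{\mathbf{P}})}{\alpha}\ge0$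 for all $\mathbf{d}\in\mathbb{R}^D$. *)

(* Defs.v *)
From HB Require Import structures.
From mathcomp Require Import all_boot all_order all_algebra.
From mathcomp Require Import all_classical all_reals all_analysis.
Set Implicit Arguments. Unset Strict Implicit. Unset Printing Implicit Defensive.
Import Order.TTheory GRing.Theory Num.Theory numFieldNormedType.Exports.
Local Open Scope classical_set_scope.
Local Open Scope ring_scope.

Section Net.
Variables (R : realType) (nI d : nat).

(* Parameters P = (W, H) with |J| = 1: W : |I| x d, H : 1 x |I|.
   This is R^D with D = |I| + |I| d. *)
Definition param := ('M[R]_(nI, d) * 'rV[R]_nI)%type.

Definition padd (P Q : param) : param := (P.1 + Q.1, P.2 + Q.2).
Definition pscale (a : R) (P : param) : param := (a *: P.1, a *: P.2).
Definition psub (P Q : param) : param := (P.1 - Q.1, P.2 - Q.2).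

Definition pnorm2 (P : param) : R :=
  \sum_(i < nI) \sum_(j < d) (P.1 i j) ^+ 2 + \sum_(i < nI) (P.2 0 i) ^+ 2.

Definition rho (ap am : R) (z : R) : R := if 0 <= z then ap * z else am * z.

Definition yhat (ap am : R) (P : param) (x : 'cV[R]_d) : R :=
  (P.2 *m map_mx (rho ap am) (P.1 *m x)) 0 0.

Definition loss (ap am : R) (nK : nat) (xs : 'I_nK -> 'cV[R]_d)
  (ys : 'I_nK -> R) (P : param) : R :=
  2^-1 * \sum_(k < nK) (yhat ap am P (xs k) - ys k) ^+ 2.

Definition stationary (L : param -> R) (P : param) : Prop :=
  forall dir : param, exists l : R,
    ((fun a : R => (L (padd P (pscale a dir)) - L P) / a) @ at_right 0 --> l)
    /\ 0 <= l.

Definition local_min (L : param -> R) (P : param) : Prop :=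
  exists e : R, 0 < e /\ forall Q : param, pnorm2 (psub Q P) < e ^+ 2 -> L P <= L Q.

End Net.

(* Main.v *)
Require Import Defs.
From HB Require Import structures.
From mathcomp Require Import all_boot all_order all_algebra.
From mathcomp Require Import all_classical all_reals all_analysis.
From mathcomp Require Import ring lra.
Import Order.TTheory GRing.Theory Num.Theory numFieldNormedType.Exports.
Local Open Scope classical_set_scope.
Local Open Scope ring_scope.

Section Aux.
Variables (R : realType) (nI d nK : nat) (ap am : R)
  (xs : 'I_nK -> 'cV[R]_d) (ys : 'I_nK -> R).

Local Notation rh := (rho ap am).
Local Notation L := (loss ap am xs ys).

Lemma rho0 : rh 0 = 0.
Proof. by rewrite /rho lexx mulr0. Qed.

Lemma rho_homo (c z : R) : 0 <= c -> rh (c * z) = c * rh z.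
Proof.
move=> c0; rewrite /rho; have [->|cpos] := eqVneq c 0.
  by rewrite !mul0r lexx mulr0.
have cp : 0 < c by rewrite lt_def cpos c0.
by rewrite pmulr_rge0 //; case: ifP => _; ring.
Qed.

Lemma rho_lin (z u t : R) : (z = 0 \/ `|u| < `|z|) -> 0 <= t <= 1 ->
  rh (z + t * u) = rh z + t * (rh (z + u) - rh z).
Proof.
move=> hz /andP[t0 t1]; case: hz => [->|hu].
  by rewrite !add0r rho_homo // rho0; ring.
have hu1 := ler_norm u; have hu2 : - `|u| <= u by rewrite lerNl -normrN ler_norm.
have hn := normr_ge0 u.
have [zp|zn|z0] := ltrgtP 0 z.
- have zz : `|z| = z by rewrite gtr0_norm.
  rewrite zz in hu.
  have h1 : 0 <= z + t * u by nra.
  have h2 : 0 <= z + u by nra.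
  by rewrite /rho h1 h2 (ltW zp); ring.
- have zz : `|z| = - z by rewrite ltr0_norm.
  rewrite zz in hu.
  have h1 : z + t * u < 0 by nra.
  have h2 : z + u < 0 by nra.
  by rewrite /rho !lt_geF //; ring.
- by rewrite -z0 normr0 ltNge normr_ge0 in hu.
Qed.

Lemma yhatE (P : param R nI d) (x : 'cV[R]_d) :
  yhat ap am P x = \sum_i P.2 0 i * rh ((P.1 *m x) i 0).
Proof. by rewrite /yhat !mxE; apply: eq_bigr => i _; rewrite mxE. Qed.

Lemma dir1E (P D : param R nI d) s (x : 'cV[R]_d) i :
  ((padd P (pscale s D)).1 *m x) i 0 = (P.1 *m x) i 0 + s * (D.1 *m x) i 0.
Proof. by rewrite /= mulmxDl -scalemxAl !mxE. Qed.

Lemma dir2E (P D : param R nI d) s i :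
  (padd P (pscale s D)).2 0 i = P.2 0 i + s * D.2 0 i.
Proof. by rewrite /= !mxE. Qed.

Lemma lossD (P Q : param R nI d) :
  L Q - L P = \sum_k ((yhat ap am P (xs k) - ys k) *
     (yhat ap am Q (xs k) - yhat ap am P (xs k)) +
     2^-1 * (yhat ap am Q (xs k) - yhat ap am P (xs k)) ^+ 2).
Proof.
rewrite /loss -mulrBr -sumrB mulr_sumr; apply: eq_bigr => k _.
by field.
Qed.

Lemma stat_lin (P : param R nI d) : stationary L P ->
  forall (D : param R nI d) (A B : R),
  (forall s, 0 < s <= 1 -> L (padd P (pscale s D)) - L P = s * A + s ^+ 2 * B) ->
  0 <= A.
Proof.
move=> hst D A B hD; have [l [hl l0]] := hst D.
suff -> : A = l by [].
have hq : (fun a : R => A + a * B) @ 0^'+ --> A.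
  rewrite -[X in _ --> X]addr0; apply: cvgD; first exact: cvg_cst.
  rewrite -[X in _ --> X](mul0r B); apply: cvgMl.
  exact: (@cvg_at_right_filter R R id 0 0 cvg_id).
suff hA : (fun a => (L (padd P (pscale a D)) - L P) / a) @ 0^'+ --> A.
  by apply/esym; apply: (cvg_unique _ hl hA).
apply: cvg_trans hq.
apply: near_eq_cvg; near=> a.
have a0 : 0 < a by near: a; exact: nbhs_right_gt.
have a1 : a <= 1 by near: a; apply: nbhs_right_le; exact: ltr01.
rewrite hD ?a0 ?a1 //; field; exact: lt0r_neq0.
Unshelve. all: by end_near.
Qed.


Variable (P : param R nI d).
Local Notation z i k := ((P.1 *m xs k) i 0).
Local Notation rr k := (yhat ap am P (xs k) - ys k).

Lemma yhat_single (D : param R nI d) (i0 : 'I_nI) s (x : 'cV[R]_d) :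
  (forall i, i != i0 -> D.2 0 i = 0 /\ (D.1 *m x) i 0 = 0) ->
  yhat ap am (padd P (pscale s D)) x - yhat ap am P x =
  (P.2 0 i0 + s * D.2 0 i0) * rh ((P.1 *m x) i0 0 + s * (D.1 *m x) i0 0)
  - P.2 0 i0 * rh ((P.1 *m x) i0 0).
Proof.
move=> hD; rewrite !yhatE -sumrB (bigD1 i0) //= big1 ?addr0.
  by rewrite dir1E dir2E.
move=> i hi; have [h1 h2] := hD i hi.
by rewrite dir1E dir2E h1 h2 !mulr0 !addr0 subrr.
Qed.

Definition Dir (i0 : 'I_nI) (V : 'M[R]_(nI, d)) (lam tt : R) : param R nI d :=
  (\matrix_(i, j) (if i == i0 then lam * V i j else 0),
   \row_(i < nI) (if i == i0 then tt else 0)).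

Lemma Dir1E i0 V lam tt (x : 'cV[R]_d) i :
  ((Dir i0 V lam tt).1 *m x) i 0 = if i == i0 then lam * (V *m x) i0 0 else 0.
Proof.
rewrite !mxE; case: (eqVneq i i0) => [->|hne].
  rewrite mulr_sumr; apply: eq_bigr => j _; rewrite ?mxE eqxx; ring.
by rewrite big1 // => j _; rewrite ?mxE (negbTE hne) mul0r.
Qed.

Lemma Dir2E i0 V lam tt i : (Dir i0 V lam tt).2 0 i = if i == i0 then tt else 0.
Proof. by rewrite mxE. Qed.

Lemma saddle_diff i0 V lam tt s :
  P.2 0 i0 = 0 ->
  (forall k, z i0 k = 0 \/ `|(V *m xs k) i0 0| < `|z i0 k|) ->
  0 <= s * lam <= 1 ->
  let a k := rh (z i0 k + (V *m xs k) i0 0) - rh (z i0 k) in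
  L (padd P (pscale s (Dir i0 V lam tt))) - L P =
  s * tt * (\sum_k rr k * rh (z i0 k)) +
  s ^+ 2 * (tt * lam * (\sum_k rr k * a k) + 2^-1 * tt ^+ 2 *
     ((\sum_k rh (z i0 k) ^+ 2) + s * (2 * lam * \sum_k rh (z i0 k) * a k)
      + s ^+ 2 * (lam ^+ 2 * \sum_k a k ^+ 2))).
Proof.
move=> hH hV hs a; rewrite lossD.
have he : forall k, yhat ap am (padd P (pscale s (Dir i0 V lam tt))) (xs k)
   - yhat ap am P (xs k) = s * tt * (rh (z i0 k) + (s * lam) * a k).
  move=> k; rewrite (@yhat_single _ i0); last first.
    by move=> i hi; rewrite Dir1E Dir2E (negbTE hi).
  rewrite Dir1E Dir2E eqxx hH (mulrA s lam) rho_lin //.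
  rewrite /a; ring.
under eq_bigr => k _ do rewrite he.
rewrite (eq_bigr (fun k => s * tt * (rr k * rh (z i0 k)) + s ^+ 2 * (tt * lam * (rr k * a k)
   + 2^-1 * tt ^+ 2 * (rh (z i0 k) ^+ 2 + s * (2 * lam * (rh (z i0 k) * a k))
   + s ^+ 2 * (lam ^+ 2 * a k ^+ 2))))); last by move=> k _; ring.
rewrite big_split /= -mulr_sumr -mulr_sumr big_split /= -!mulr_sumr.
rewrite !big_split /= -!mulr_sumr.
done.
Qed.


Lemma lim_poly (c0 c1 c2 : R) :
  (fun t : R => c0 + t * (c1 + t * c2)) @ 0^'+ --> c0.
Proof.
have hid : (fun t : R => t) @ 0^'+ --> (0 : R).
  exact: (@cvg_at_right_filter R R id 0 0 cvg_id).
rewrite -[X in _ --> X]addr0; apply: cvgD; first exact: cvg_cst.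
rewrite -[X in _ --> X](mul0r (c1 + 0 * c2)); apply: cvgM => //.
apply: cvgD; first exact: cvg_cst.
by apply: cvgMl.
Qed.

Lemma cond0 (i0 : 'I_nI) k : z i0 k = 0 \/ `|((0 : 'M[R]_(nI, d)) *m xs k) i0 0| < `|z i0 k|.
Proof.
have -> : ((0 : 'M[R]_(nI, d)) *m xs k) i0 0 = 0 by rewrite mul0mx mxE.
rewrite normr0; have [->|h] := eqVneq (z i0 k) 0; first by left.
by right; rewrite normr_gt0.
Qed.

Lemma S0_zero i0 : stationary L P -> P.2 0 i0 = 0 ->
  \sum_k rr k * rh (z i0 k) = 0.
Proof.
move=> hst hH.
have key : forall c : R, 0 <= c * \sum_k rr k * rh (z i0 k).
  move=> c; apply: (@stat_lin P hst (Dir i0 0 0 c) _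
    (2^-1 * c ^+ 2 * \sum_k rh (z i0 k) ^+ 2)) => s /andP[s0 s1].
  rewrite saddle_diff //; first by ring.
  - exact: cond0.
  - by rewrite mulr0 lexx ler01.
have := key 1; have := key (-1); lra.
Qed.


Lemma partB i0 V : stationary L P -> P.2 0 i0 = 0 ->
  (forall k, z i0 k = 0 \/ `|(V *m xs k) i0 0| < `|z i0 k|) ->
  \sum_k rr k * rh (z i0 k + (V *m xs k) i0 0) != 0 ->
  exists (l : param R nI d) (C : R), pnorm2 l = 1 /\ C < 0 /\
    (\forall delta \near 0^'+, L (padd P (pscale delta l)) - L P < 0) /\
    ((fun delta : R => (L (padd P (pscale delta l)) - L P) / delta ^+ 2)
       @ 0^'+ --> C).
Proof.
move=> hst hH hV.
set G := \sum_k _ => hG.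
have S0 := S0_zero i0 hst hH.
have hG' : \sum_k rr k * (rh (z i0 k + (V *m xs k) i0 0) - rh (z i0 k)) = G.
  by under eq_bigr => k _ do rewrite mulrBr; rewrite sumrB S0 subr0.
pose M := \sum_k rh (z i0 k) ^+ 2.
have M0 : 0 <= M by apply: sumr_ge0 => k _; exact: sqr_ge0.
have M1 : M + 1 != 0 by rewrite gt_eqF // ltr_wpDl.
pose t := - G / (M + 1).
have t0 : t != 0 by rewrite mulf_neq0 ?oppr_eq0 ?invr_eq0.
pose N := \sum_j V i0 j ^+ 2 + t ^+ 2.
have N0 : 0 < N.
  apply: ltr_wpDl; first by apply: sumr_ge0 => j _; exact: sqr_ge0.
  by rewrite lt_def sqrf_eq0 t0 sqr_ge0.
pose lam := (Num.sqrt N)^-1.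
have sq0 : 0 < Num.sqrt N by rewrite sqrtr_gt0.
have lam0 : 0 < lam by rewrite invr_gt0.
have lam2 : lam ^+ 2 * N = 1.
  by rewrite /lam exprVn sqr_sqrtr ?ltW // mulVf // gt_eqF.
pose C := lam ^+ 2 * (t * G + 2^-1 * t ^+ 2 * M).
have C0 : C < 0.
  rewrite pmulr_rlt0 ?exprn_gt0 //.
  have -> : t * G + 2^-1 * t ^+ 2 * M = - (G ^+ 2 / (M + 1) ^+ 2) * (2^-1 * M + 1).
    by rewrite /t; field.
  rewrite mulNr oppr_lt0; apply: mulr_gt0; last by lra.
  apply: divr_gt0; first by rewrite lt_def sqrf_eq0 hG sqr_ge0.
  by apply: exprn_gt0; lra.
exists (Dir i0 V lam (lam * t)), C; split.
  rewrite /pnorm2.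
  have e1 : forall i, i != i0 -> \sum_(j < d) (Dir i0 V lam (lam * t)).1 i j ^+ 2 = 0.
    by move=> i hi; apply: big1 => j _; rewrite mxE (negbTE hi) expr2 mulr0.
  have e2 : forall i, i != i0 -> (Dir i0 V lam (lam * t)).2 0 i ^+ 2 = 0.
    by move=> i hi; rewrite mxE (negbTE hi) expr2 mulr0.
  rewrite (bigD1 i0) //= (eq_bigr _ e1) big1_eq addr0.
  rewrite [X in _ + X](bigD1 i0) //= (eq_bigr _ e2) big1_eq addr0.
  under eq_bigr => j _ do rewrite mxE eqxx exprMn.
  by rewrite -mulr_sumr mxE eqxx exprMn -mulrDr.
pose K1 := lam ^+ 2 * 2^-1 * t ^+ 2 * (2 * lam * \sum_k rh (z i0 k) *
   (rh (z i0 k + (V *m xs k) i0 0) - rh (z i0 k))).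
pose K2 := lam ^+ 2 * 2^-1 * t ^+ 2 * (lam ^+ 2 * \sum_k
   (rh (z i0 k + (V *m xs k) i0 0) - rh (z i0 k)) ^+ 2).
have hdiff : \forall δ \near 0^'+,
   (L (padd P (pscale δ (Dir i0 V lam (lam * t)))) - L P) / δ ^+ 2
   = C + δ * (K1 + δ * K2).
  near=> δ.
  have d0 : 0 < δ by near: δ; exact: nbhs_right_gt.
  have d1 : δ <= lam^-1 by near: δ; apply: nbhs_right_le; rewrite invr_gt0.
  have dl : 0 <= δ * lam <= 1.
    apply/andP; split; first by rewrite mulr_ge0 // ltW.
    by rewrite -(mulVf (lt0r_neq0 lam0)) ler_pM2r.
  rewrite saddle_diff // S0 hG' /C /K1 /K2.
  by rewrite /M; field; exact: lt0r_neq0.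
have hlim : (fun δ : R => (L (padd P (pscale δ (Dir i0 V lam (lam * t)))) - L P)
     / δ ^+ 2) @ 0^'+ --> C.
  apply: cvg_trans (lim_poly C K1 K2).
  apply: near_eq_cvg; apply: filterS hdiff => δ /= ->. done.
split => //; split => //.
have hn := cvgr_lt _ hlim _ C0.
near=> δ.
have d0 : 0 < δ by near: δ; exact: nbhs_right_gt.
have : (L (padd P (pscale δ (Dir i0 V lam (lam * t)))) - L P) / δ ^+ 2 < 0.
  by near: δ; exact: hn.
by rewrite pmulr_llt0 // invr_gt0 exprn_gt0.
Unshelve. all: by end_near.
Qed.

Definition cc (Q : param R nI d) i :=
  if P.2 0 i == 0 then 1 else Q.2 0 i / P.2 0 i.

Definition Dt (Q : param R nI d) : param R nI d :=
  (\matrix_(i, j) (cc Q i * Q.1 i j - P.1 i j), 0).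

Lemma Dt1E Q (x : 'cV[R]_d) i :
  ((Dt Q).1 *m x) i 0 = cc Q i * (Q.1 *m x) i 0 - (P.1 *m x) i 0.
Proof.
rewrite !mxE mulr_sumr -sumrB; apply: eq_bigr => j _; rewrite !mxE; ring.
Qed.

Lemma partA_core (Q : param R nI d) : stationary L P ->
  (forall i0 (V : 'M[R]_(nI, d)), P.2 0 i0 = 0 ->
     (forall k, z i0 k = 0 \/ `|(V *m xs k) i0 0| < `|z i0 k|) ->
     \sum_k rr k * rh (z i0 k + (V *m xs k) i0 0) = 0) ->
  (forall i, 0 <= cc Q i) ->
  (forall i k, z i k = 0 \/ `|cc Q i * (Q.1 *m xs k) i 0 - z i k| < `|z i k|) ->
  L P <= L Q.
Proof.
move=> hst hns C1 C2.
pose E k := \sum_i P.2 0 i * (rh (cc Q i * (Q.1 *m xs k) i 0) - rh (z i k)).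
have hE : 0 <= \sum_k rr k * E k.
  apply: (@stat_lin P hst (Dt Q) _ (\sum_k 2^-1 * E k ^+ 2)) => s /andP[s0 s1].
  have he : forall k, yhat ap am (padd P (pscale s (Dt Q))) (xs k)
     - yhat ap am P (xs k) = s * E k.
    move=> k; rewrite !yhatE -sumrB /E mulr_sumr; apply: eq_bigr => i _.
    rewrite dir1E dir2E Dt1E mxE mulr0 addr0 rho_lin; last 2 first.
    - exact: C2.
    - by rewrite (ltW s0) s1.
    rewrite [z i k + _]addrC subrK; ring.
  rewrite lossD; under eq_bigr => k _ do rewrite he.
  rewrite mulr_sumr mulr_sumr -big_split /=; apply: eq_bigr => k _; ring.
have hq : forall i k, (Q.1 *m xs k) i 0 = z i k + ((Q.1 - P.1) *m xs k) i 0.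
  by move=> i k; rewrite !mxE -big_split /=; apply: eq_bigr => j _; rewrite !mxE; ring.
have he : forall k, yhat ap am Q (xs k) - yhat ap am P (xs k) =
   E k + \sum_i (if P.2 0 i == 0 then Q.2 0 i * rh ((Q.1 *m xs k) i 0) else 0).
  move=> k; rewrite !yhatE -sumrB /E -big_split /=; apply: eq_bigr => i _.
  have := C1 i; rewrite /cc; case: eqP => [->|hH] c1.
    by rewrite mul1r !mul0r; ring.
  rewrite rho_homo //; field; exact/eqP.
have hz : \sum_k rr k *
   (\sum_i (if P.2 0 i == 0 then Q.2 0 i * rh ((Q.1 *m xs k) i 0) else 0)) = 0.
  under eq_bigr => k _ do rewrite mulr_sumr.
  rewrite exchange_big /=; apply: big1 => i _; case: eqP => hH; last first.
    by apply: big1 => k _; rewrite mulr0.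
  under eq_bigr => k _ do rewrite mulrCA.
  rewrite -mulr_sumr.
  under eq_bigr => k _ do rewrite hq.
  rewrite (hns i (Q.1 - P.1) hH) ?mulr0 // => k.
  have := C2 i k; rewrite /cc hH eqxx mul1r hq addrC addKr.
  done.
rewrite -subr_ge0 lossD.
under eq_bigr => k _ do rewrite he.
rewrite big_split /=.
rewrite (eq_bigr (fun k => rr k * E k + rr k *
   (\sum_i (if P.2 0 i == 0 then Q.2 0 i * rh ((Q.1 *m xs k) i 0) else 0))));
  last by move=> k _; rewrite mulrDr.
rewrite big_split /= hz addr0; apply: addr_ge0 => //.
by apply: sumr_ge0 => k _; apply: mulr_ge0; [rewrite invr_ge0; lra | exact: sqr_ge0].
Qed.

Lemma le_sum_term (T : finType) (F : T -> R) t :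
  (forall t, 0 <= F t) -> F t <= \sum_t F t.
Proof.
move=> F0; rewrite (bigD1 t) //= lerDl; apply: sumr_ge0 => i _; exact: F0.
Qed.

Lemma fin_lower (T : finType) (f : T -> R) :
  exists m, 0 < m /\ forall t, f t != 0 -> m <= `|f t|.
Proof.
pose S := \sum_t (if f t == 0 then 0 else `|f t|^-1).
have S0 : 0 <= S.
  by apply: sumr_ge0 => t _; case: eqP => // _; rewrite invr_ge0.
exists (1 + S)^-1; split; first by rewrite invr_gt0; lra.
move=> t ht.
have ft : 0 < `|f t| by rewrite normr_gt0.
have hS : `|f t|^-1 <= S.
  have := @le_sum_term T (fun t => if f t == 0 then 0 else `|f t|^-1) t.
  rewrite (negbTE ht); apply => i; case: eqP => // _; rewrite invr_ge0.
rewrite -[X in _ <= X]invrK lef_pV2 ?posrE ?invr_gt0 //; last by lra.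
lra.
Qed.

Lemma entry_bounds (Q : param R nI d) e : 0 < e -> pnorm2 (psub Q P) < e ^+ 2 ->
  (forall i j, `|Q.1 i j - P.1 i j| < e) /\ (forall i, `|Q.2 0 i - P.2 0 i| < e).
Proof.
move=> e0; rewrite /pnorm2 => hQ.
have sq : forall a : R, a ^+ 2 < e ^+ 2 -> `|a| < e.
  move=> a ha; have hk := real_normK (num_real a).
  have hn := normr_ge0 a; nra.
have s1 : 0 <= \sum_i \sum_j (psub Q P).1 i j ^+ 2.
  by apply: sumr_ge0 => i _; apply: sumr_ge0 => j _; exact: sqr_ge0.
have s2 : 0 <= \sum_i (psub Q P).2 0 i ^+ 2.
  by apply: sumr_ge0 => i _; exact: sqr_ge0.
split.
  move=> i j; apply: sq.
  have h1 := @le_sum_term _ (fun j => (psub Q P).1 i j ^+ 2) j (fun j => sqr_ge0 _).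
  have h2 := @le_sum_term _ (fun i => \sum_j (psub Q P).1 i j ^+ 2) i
    (fun i => sumr_ge0 _ (fun j _ => sqr_ge0 _)).
  have e1 : Q.1 i j - P.1 i j = (psub Q P).1 i j.
    rewrite /psub /= !mxE; reflexivity.
  rewrite e1; move: h1 h2 => /= h1 h2; lra.
move=> i; apply: sq.
have h1 := @le_sum_term _ (fun i => (psub Q P).2 0 i ^+ 2) i (fun j => sqr_ge0 _).
have e1 : Q.2 0 i - P.2 0 i = (psub Q P).2 0 i.
  rewrite /psub /= !mxE; reflexivity.
rewrite e1; move: h1 => /= h1; lra.
Qed.

Lemma bounds : exists e, 0 < e /\ forall Q : param R nI d,
  pnorm2 (psub Q P) < e ^+ 2 ->
  (forall i, 0 <= cc Q i) /\
  (forall i k, z i k = 0 \/ `|cc Q i * (Q.1 *m xs k) i 0 - z i k| < `|z i k|).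
Proof.
have [mH [mH0 hmH]] := @fin_lower _ (fun i : 'I_nI => P.2 0 i).
have [mZ [mZ0 hmZ]] := @fin_lower _ (fun p : 'I_nI * 'I_nK => z p.1 p.2).
pose m := Num.min mH mZ.
have m0 : 0 < m by rewrite lt_min mH0 mZ0.
have mmH : m <= mH by rewrite ge_min lexx.
have mmZ : m <= mZ by rewrite ge_min lexx orbT.
pose Zb := \sum_(p : 'I_nI * 'I_nK) `|z p.1 p.2|.
have hZb : forall i k, `|z i k| <= Zb.
  move=> i k; exact: (@le_sum_term _ (fun p : 'I_nI * 'I_nK => `|z p.1 p.2|) (i, k)
    (fun p => normr_ge0 _)).
pose X := \sum_k \sum_j `|xs k j 0|.
have hX : forall k, \sum_j `|xs k j 0| <= X.
  move=> k; exact: (@le_sum_term _ (fun k => \sum_j `|xs k j 0|) k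
    (fun k => sumr_ge0 _ (fun j _ => normr_ge0 _))).
have X0 : 0 <= X by apply: sumr_ge0 => k _; apply: sumr_ge0 => j _.
have Zb0 : 0 <= Zb by apply: sumr_ge0 => p _.
pose B := Zb / m.
have B0 : 0 <= B by rewrite divr_ge0 // ltW.
pose K := B + 2 * X + 1.
have K1 : 1 <= K by rewrite /K; lra.
pose e := m / (2 * K).
have e0 : 0 < e by rewrite divr_gt0 //; lra.
have eK : e * (2 * K) = m by rewrite /e divfK //; apply: lt0r_neq0; lra.
exists e; split => // Q hQ.
have [hW hh] := entry_bounds Q e e0 hQ.
have hu : forall i k, `|((Q.1 - P.1) *m xs k) i 0| <= e * X.
  move=> i k; rewrite mxE; apply: le_trans (ler_norm_sum _ _ _) _.
  apply: (@le_trans _ _ (\sum_j e * `|xs k j 0|)).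
    apply: ler_sum => j _; rewrite normrM ler_wpM2r //.
    have -> : (Q.1 - P.1) i j = Q.1 i j - P.1 i j by rewrite !mxE.
    exact: ltW.
  rewrite -mulr_sumr ler_wpM2l ?(ltW e0) //.
have hq : forall i k, (Q.1 *m xs k) i 0 = z i k + ((Q.1 - P.1) *m xs k) i 0.
  by move=> i k; rewrite !mxE -big_split /=; apply: eq_bigr => j _; rewrite !mxE; ring.
have hc : forall i, P.2 0 i != 0 -> `|Q.2 0 i / P.2 0 i - 1| * m <= e.
  move=> i hi.
  have hP : 0 < `|P.2 0 i| by rewrite normr_gt0.
  have hP2 : m <= `|P.2 0 i| by apply: le_trans mmH (hmH i hi).
  have -> : Q.2 0 i / P.2 0 i - 1 = (Q.2 0 i - P.2 0 i) / P.2 0 i by field.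
  rewrite normrM normfV.
  apply: (@le_trans _ _ (`|Q.2 0 i - P.2 0 i| / `|P.2 0 i| * `|P.2 0 i|)).
    by apply: ler_wpM2l => //; rewrite divr_ge0.
  rewrite divfK ?lt0r_neq0 //; exact: ltW.
split.
  move=> i; rewrite /cc; case: eqP => [_|/eqP hi]; first exact: ler01.
  have h := hc i hi.
  set c := Q.2 0 i / P.2 0 i in h *.
  have hn : - `|c - 1| <= c - 1 by rewrite lerNl -normrN ler_norm.
  have hn0 := normr_ge0 (c - 1).
  nra.
move=> i k.
have [->|zk] := eqVneq (z i k) 0; first by left.
right.
have hz : m <= `|z i k| by apply: le_trans mmZ (hmZ (i, k) zk).
have hzb := hZb i k.
have hui := hu i k.
rewrite hq; rewrite /cc; case: eqP => [_|/eqP hi].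
  have hK : K = B + 2 * X + 1 by [].
  have : e * X < e * (2 * K) by rewrite ltr_pM2l //; lra.
  rewrite mul1r addrC addKr; lra.
have h := hc i hi.
set c := Q.2 0 i / P.2 0 i in h *.
set u := ((Q.1 - P.1) *m xs k) i 0 in hui *.
have -> : c * (z i k + u) - z i k = (c - 1) * z i k + c * u by ring.
have hn0 := normr_ge0 (c - 1).
have hc2 : `|c| <= 2.
  have : `|c| <= `|c - 1| + 1.
    by have := ler_normD (c - 1) 1; rewrite subrK normr1.
  nra.
have a1 : `|c - 1| * `|z i k| <= e * B.
  apply: (@le_trans _ _ (`|c - 1| * Zb)); first by rewrite ler_wpM2l.
  have -> : `|c - 1| * Zb = (`|c - 1| * m) * B by rewrite /B; field; exact: lt0r_neq0.
  by rewrite ler_wpM2r.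
have a2 : `|c| * `|u| <= 2 * (e * X).
  by apply: ler_pM => //; exact: normr_ge0.
apply: (le_lt_trans (ler_normD _ _)); rewrite (normrM (c - 1)) (normrM c).
have : e * B + 2 * (e * X) < m.
  have hK : K = B + 2 * X + 1 by [].
  rewrite -eK hK; have : 0 <= e * X by rewrite mulr_ge0 // ltW.
  have : 0 <= e * B by rewrite mulr_ge0 // ltW.
  nra.
lra.
Qed.

Lemma main_sec : stationary L P -> ~ local_min L P ->
  exists (l : param R nI d) (C : R),
    pnorm2 l = 1 /\ C < 0 /\
    (\forall delta \near at_right 0,
        L (padd P (pscale delta l)) - L P < 0) /\
    ((fun delta : R => (L (padd P (pscale delta l)) - L P) / delta ^+ 2)
       @ at_right 0 --> C).
Proof.
move=> hst hnl.
case: (pselect (exists i0 (V : 'M[R]_(nI, d)), P.2 0 i0 = 0 /\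
   (forall k, z i0 k = 0 \/ `|(V *m xs k) i0 0| < `|z i0 k|) /\
   \sum_k rr k * rh (z i0 k + (V *m xs k) i0 0) != 0)).
  by move=> [i0 [V [hH [hV hG]]]]; exact: (partB i0 V hst hH hV hG).
move=> hns; exfalso; apply: hnl.
have [e [e0 he]] := bounds.
exists e; split => // Q hQ.
have [C1 C2] := he Q hQ.
apply: (partA_core Q hst) => // i0 V hH hV.
apply: contrapT => hG; apply: hns; exists i0, V; split => //; split => //.
exact/eqP.
Qed.

End Aux.

Theorem corollary1 (R : realType) (nI nK d : nat) (hd : (1 < d)%N)
  (ap am : R) (hapm : ap != am)
  (xs : 'I_nK -> 'cV[R]_d) (ys : 'I_nK -> R) (Pb : param R nI d) :
  stationary (loss ap am xs ys) Pb ->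
  ~ local_min (loss ap am xs ys) Pb ->
  exists (l : param R nI d) (C : R),
    pnorm2 l = 1 /\ C < 0 /\
    (\forall delta \near at_right 0,
        loss ap am xs ys (padd Pb (pscale delta l)) - loss ap am xs ys Pb < 0) /\
    ((fun delta : R =>
        (loss ap am xs ys (padd Pb (pscale delta l)) - loss ap am xs ys Pb)
          / delta ^+ 2) @ at_right 0 --> C).
Proof.
exact: main_sec.
Qed.
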